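(* Let $\mu\in\mathcal P_2(\mathbb R^d)$, $\psi\in T_\mu(\mathcal P_2(\mathbb R^d))$ and $\eta\in\mathcal P(C([0,1],\mathbb R^d))$ with $(e_0)_\#\eta=\mu$. Then there exists a parallel transport of $\psi$ along $\eta$.
   Context: $\mathcal P(O)$ denotes Borel probability measures on $O$; $\mathcal P_2(\mathbb R^d)$ those on $\mathbb R^d$ with finite second moment; $f_\#m$ is the image measure. $T_\mu(\mathcal P_2(\mathbb R^d))$ is the set of measurable maps $\psi:\mathbb R^d\to\mathcal P(\mathbb R^d)$, $x\mapsto\psi_x$, with $\int\int|z|^2\psi_x(dz)\mu(dx)<\infty$; such $\psi$ is identified with the measure $\mu(dx)\psi_x(dz)$ on $\mathbb R^{2d}$. For $t\in[0,1]$, $e_t$ is the evaluation map $w\mapsto w(t)$ on spaces of continuous curves. $\pi_1,\pi_2$ are the projections of $\mathbb R^d\times\mathbb R^d$. Let $p_1:C([0,1],\mathbb R^{2d})\to C([0,1],\mathbb R^d)$, $p_1(w)(t)=\pi_1(w(t))$; let $C^1_y([0,1],\mathbb R^{2d})$ be the set of continuous curves $w$ with $t\mapsto\pi_2(w(t))$ of class $C^1$, and on it $\partial_2(w)(t)=\frac{d}{dt}\pi_2(w(t))$. A parallel transport of $\psi\in T_\mu(\mathcal P_2(\mathbb R^d))$ along $\eta$ (with $(e_0)_\#\eta=\mu$) is a probability measure $\Psi$ on $C([0,1],\mathbb R^{2d})$ concentrated on $C^1_y([0,1],\mathbb R^{2d})$ such that $(p_1)_\#\Psi=\eta$, $(\partial_2)_\#\Psi=\delta_0$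 (Dirac mass at the zero curve), and $(e_0)_\#\Psi(dx,dz)=\mu(dx)\psi_x(dz)$. *)

(* Defs.v *)
From HB Require Import structures.
From mathcomp Require Import all_boot all_order all_algebra.
From mathcomp Require Import all_classical all_reals all_analysis.
Set Implicit Arguments. Unset Strict Implicit. Unset Printing Implicit Defensive.
Import Order.TTheory GRing.Theory Num.Theory.
Import numFieldNormedType.Exports.
Local Open Scope classical_set_scope.
Local Open Scope ring_scope.

(* Borel sigma-algebra on R^d = 'rV[R]_d (more generally on matrices),       *)
Definition borel_display : measure_display. Proof. exact. Qed.

Section borel_matrix.
Context (R : realType) (m n : nat).

Definition borel_mx : set (set 'M[R]_(m, n)) := <<s open >>.

Lemma borel_mx0 : borel_mx set0.
Proof. exact: sigma_algebra0. Qed.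

Lemma borel_mxC (A : set 'M[R]_(m, n)) : borel_mx A -> borel_mx (~` A).
Proof. by move=> hA; rewrite -setTD; exact: sigma_algebraCD. Qed.

Lemma borel_mxU (F : (set 'M[R]_(m, n))^nat) :
  (forall i, borel_mx (F i)) -> borel_mx (\bigcup_i F i).
Proof. exact: sigma_algebra_bigcup. Qed.

HB.instance Definition _ := @isMeasurable.Build borel_display 'M[R]_(m, n)
  borel_mx borel_mx0 borel_mxC borel_mxU.
End borel_matrix.

Definition sqnorm (R : realType) (d : nat) (z : 'rV[R]_d) : R :=
  \sum_(i < d) z ord0 i ^+ 2.

(* Continuous curves [0,1] -> V, represented as functions R -> V that are    *)
(* continuous on [0,1] and constant outside [0,1] (f t = f (clamp t)); this  *)
(* is a bijective encoding of C([0,1], V).                                   *)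
Section curves.
Context (R : realType).

Definition clamp01 (t : R) : R := Num.max 0 (Num.min t 1).

Definition is_curve (V : topologicalType) (f : R -> V) : Prop :=
  {within `[0, 1]%classic, continuous f} /\ forall t, f t = f (clamp01 t).

Definition curve (V : topologicalType) := {f : R -> V | is_curve f}.

Definition curve_fun (V : topologicalType) (w : curve V) : R -> V := proj1_sig w.

Lemma is_curve_cst (V : ptopologicalType) : is_curve (fun _ : R => (point : V)).
Proof. by split => // t; exact: cst_continuous. Qed.

Definition curve_point (V : ptopologicalType) : curve V :=
  exist _ _ (is_curve_cst V).

HB.instance Definition _ (V : ptopologicalType) := gen_eqMixin (curve V).
HB.instance Definition _ (V : ptopologicalType) := gen_choiceMixin (curve V).
HB.instance Definition _ (V : ptopologicalType) :=
  isPointed.Build (curve V) (curve_point V).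

Definition ev (V : topologicalType) (t : R) (w : curve V) : V := curve_fun w t.

Definition ev_generators (V : topologicalType) (mV : set (set V)) :
  set (set (curve V)) :=
  [set ev t @^-1` A | t in `[0, 1]%classic & A in mV]%classic.
End curves.

(* The measurable space C([0,1], V) with the sigma-algebra generated by the *)
(* evaluation maps (= Borel sigma-algebra of the sup-norm topology).         *)
Definition Curves (R : realType) (V : ptopologicalType) (mV : set (set V)) :=
  g_sigma_algebraType (@ev_generators R V mV).

Section projections.
Context (R : realType) (d : nat).
Local Notation Rd := 'rV[R]_d.

Lemma is_curve_fst (w : curve R (Rd * Rd)%type) :
  is_curve (fun t => (curve_fun w t).1).
Proof.
case: w => f [cf ef] /=; split; last by move=> t; rewrite ef.
move=> x; apply: continuous_comp; [exact: cf | exact: cvg_fst].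
Qed.

Definition p1 (w : curve R (Rd * Rd)%type) : curve R Rd :=
  exist _ _ (is_curve_fst w).

Definition is_deriv01 (y g : R -> Rd) : Prop :=
  forall t, t \in `[0, 1]%classic ->
    (fun h : R => h^-1 *: (y (t + h) - y t))
      @ within [set h | h != 0 /\ t + h \in `[0, 1]%classic] (nbhs (0 : R))
      --> g t.

Definition C1y (w : curve R (Rd * Rd)%type) : Prop :=
  exists g : R -> Rd, {within `[0, 1]%classic, continuous g} /\
    is_deriv01 (fun t => (curve_fun w t).2) g.

Definition partial2_zero (w : curve R (Rd * Rd)%type) : Prop :=
  is_deriv01 (fun t => (curve_fun w t).2) (fun _ => 0).
End projections.

Section path_spaces.
Context (R : realType) (d : nat).
Definition Rd2 : Type := ('rV[R]_d * 'rV[R]_d)%type.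
HB.instance Definition _ := Topological.on Rd2.
HB.instance Definition _ := Pointed.on Rd2.
(* product (= Borel) sigma-algebra on R^d x R^d = R^{2d} *)
Definition meas_Rd2 : set (set Rd2) :=
  @measurable _ ('rV[R]_d * 'rV[R]_d)%type.
Definition CRd := Curves R (@measurable _ 'rV[R]_d).
Definition CRd2 := Curves R meas_Rd2.
End path_spaces.

(* Main.v *)
Require Import Defs.
From HB Require Import structures.
From mathcomp Require Import all_boot all_order all_algebra.
From mathcomp Require Import all_classical all_reals all_analysis.
From mathcomp Require Import measurable_realfun.
Import Order.TTheory GRing.Theory Num.Theory.
Import numFieldNormedType.Exports.
Local Open Scope classical_set_scope.
Local Open Scope ring_scope.

Set Implicit Arguments. Unset Strict Implicit. Unset Printing Implicit Defensive.


Lemma const01 (R : realType) (d : nat) (y : R -> 'rV[R]_d) (c : 'rV[R]_d) :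
  {within `[0, 1]%classic, continuous y} ->
  (forall n k : nat, y (clamp01 (k%:R / n.+1%:R)) = c) ->
  forall t, `[0, 1]%classic t -> y t = c.
Proof.
move=> cy hc t t01.
have /andP[t0 t1] : (0 <= t) && (t <= 1) by move: t01; rewrite /= in_itv.
pose N (n : nat) : R := n.+1%:R.
have N0 n : 0 < N n by rewrite /N ltr0n.
pose s n := (Num.truncn (t * N n))%:R / N n.
have sle n : s n <= t by rewrite /s ler_pdivrMr// truncn_le mulr_ge0// ltW.
have sge n : 0 <= s n by rewrite /s divr_ge0// ltW.
have sin n : `[0, 1]%classic (s n).
  by rewrite /= in_itv /= sge /= (le_trans (sle n)).
have sc n : y (s n) = c.
  rewrite -(hc n (Num.truncn (t * N n))); congr y.
  rewrite /clamp01 -/(N n) -/(s n).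
  by rewrite (min_l (le_trans (sle n) t1)) (max_r (sge n)).
have cs : s @ \oo --> t.
  apply: (@squeeze_cvgr _ _ _ _ (fun n => t - harmonic n) (cst t)).
  - apply: nearW => n; rewrite sle andbT /= -/(N n).
    rewrite /s ler_pdivlMr// mulrBl mulVf ?gt_eqF//.
    by rewrite lerBlDr natr1; exact: ltW (truncnS_gt _).
  - rewrite -[X in _ --> X]subr0; apply: cvgB; [exact: cvg_cst | exact: cvg_harmonic].
  - exact: cvg_cst.
have cyt : y @ within `[0, 1]%classic (nbhs t) --> y t.
  exact: ((@subspace_continuousP R _ _ y).1 cy t t01).
have sw : s @ \oo --> within `[0, 1]%classic (nbhs t).
  move=> W hW; have : \forall n \near \oo, `[0, 1]%classic (s n) -> W (s n) := cs _ hW.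
  by apply: filterS => n; apply; exact: sin.
have h1 : (y \o s) @ \oo --> y t.
  exact: cvg_trans (cvg_fmap2 sw) cyt.
have e : y \o s = cst c by apply/funext => n /=; rewrite sc.
rewrite e in h1.
have h2 : (cst c : nat -> 'rV[R]_d) @ \oo --> c by exact: cvg_cst.
exact: (cvg_unique _ h1 h2).
Qed.


Lemma mcoord (R : realType) (d : nat) (i : 'I_d) :
  measurable_fun [set: 'rV[R]_d] (fun v : 'rV[R]_d => v ord0 i).
Proof.
apply: (@measurability _ _ _ R _ _ _ (RGenOpens.measurableE R)) => _ [_ [x [y ->]] <-].
rewrite setTI; apply: sub_sigma_algebra.
apply: open_comp; first by move=> v _; exact: coord_continuous.
exact: interval_open.
Qed.

Section S.
Context (R : realType) (d : nat).
Local Notation Rd := 'rV[R]_d.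

Lemma mev (t : R) : t \in `[0, 1]%classic ->
  measurable_fun [set: CRd R d] (@ev R Rd t).
Proof.
move=> t01 _ A mA; rewrite setTI; apply: sub_sigma_algebra.
by exists t; [rewrite inE in t01|exists A].
Qed.

Lemma mev2 (t : R) : t \in `[0, 1]%classic ->
  measurable_fun [set: CRd2 R d] (@ev R (Rd2 R d) t).
Proof.
move=> t01 _ A mA; rewrite setTI; apply: sub_sigma_algebra.
by exists t; [rewrite inE in t01|exists A].
Qed.

Lemma is_curveG (w : CRd R d) (z : Rd) :
  is_curve (fun t => ((curve_fun w t, z) : Rd2 R d)).
Proof.
case: w => f [cf ef] /=; split; last by move=> t; rewrite ef.
move=> x; apply: (@cvg_pair _ _ _ _ (nbhs (f x)) (nbhs z)) => /=; [exact: cf | exact: cvg_cst].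
Qed.

Definition Gmap (p : CRd R d * Rd) : CRd2 R d := exist _ _ (is_curveG p.1 p.2).

Lemma mG : measurable_fun [set: CRd R d * Rd] Gmap.
Proof.
refine (@measurability _ _ _ (CRd2 R d) _ _ (@ev_generators R (Rd2 R d) (@meas_Rd2 R d)) erefl _).
move=> _ [B [t t01 [A mA <-]] <-].
rewrite setTI.
have -> : Gmap @^-1` (ev t @^-1` A) = (fun p => (ev t p.1, p.2)) @^-1` A by [].
have mf : measurable_fun [set: CRd R d * Rd] (fun p => (ev t p.1, p.2)).
  apply/measurable_fun_pairP; split => //=.
  exact: (measurableT_comp (mev (mem_set t01)) measurable_fst).
  exact: measurable_snd.
have := mf measurableT A mA; rewrite setTI; exact.
Qed.

Section K.
Variables (psi : R.-pker Rd ~> Rd) (eta : probability (CRd R d) R).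

Definition k1 : unit -> {measure set CRd R d -> \bar R} := fun _ => eta.

Lemma mk1 U : measurable U -> measurable_fun [set: unit] (k1 ^~ U).
Proof. move=> _; rewrite /k1. exact: measurable_cst. Qed.

HB.instance Definition _ := isKernel.Build _ _ _ _ R k1 mk1.

Lemma k1T x : k1 x [set: CRd R d] = 1%E.
Proof. exact: probability_setT. Qed.

HB.instance Definition _ := Kernel_isProbability.Build _ _ _ _ R k1 k1T.

Definition k2 : unit * CRd R d -> {measure set Rd -> \bar R} :=
  fun p => psi (ev 0 p.2).

Lemma mk2 U : measurable U -> measurable_fun [set: unit * CRd R d] (k2 ^~ U).
Proof.
move=> mU; apply: (measurableT_comp (measurable_kernel psi U mU)).
have h0 : (0:R) \in `[0, 1]%classic by rewrite inE /= in_itv /= lexx ler01.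
exact: (measurableT_comp (mev h0) measurable_snd).
Qed.

HB.instance Definition _ := isKernel.Build _ _ _ _ R k2 mk2.

Lemma k2T x : k2 x [set: Rd] = 1%E.
Proof. exact: prob_kernel. Qed.

HB.instance Definition _ := Kernel_isProbability.Build _ _ _ _ R k2 k2T.

Definition PP := mkproduct k1 k2 tt.

Definition Psi0 (B : set (CRd2 R d)) : \bar R := PP (Gmap @^-1` B).

Let Psi00 : Psi0 set0 = 0%E.
Proof. by rewrite /Psi0 preimage_set0 measure0. Qed.

Let Psi0_ge0 A : (0 <= Psi0 A)%E.
Proof. by apply: measure_ge0; rewrite -[X in measurable X]setIT; apply: mG. Qed.

Let Psi0_sigma_additive : semi_sigma_additive Psi0.
Proof.
move=> F mF tF mUF; rewrite /Psi0 preimage_bigcup.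
apply: measure_semi_sigma_additive.
- by move=> n; rewrite -[X in measurable X]setTI; exact: mG.
- apply/trivIsetP => /= i j _ _ ij; rewrite -preimage_setI.
  by move/trivIsetP : tF => /(_ _ _ _ _ ij) ->//; rewrite preimage_set0.
- by rewrite -preimage_bigcup -[X in measurable X]setTI; exact: mG.
Qed.

HB.instance Definition _ := isMeasure.Build _ _ _
  Psi0 Psi00 Psi0_ge0 Psi0_sigma_additive.


Lemma PPE A : measurable A ->
  PP A = (\int[eta]_w psi (ev 0 w) (xsection A w))%E.
Proof.
move=> mA; rewrite /PP /= /kproduct; apply: eq_integral => w _.
rewrite /kernel.intker_indic /= integral_indic ?setIT ?xsectionE//.
by rewrite -[X in measurable X]xsectionE; exact: measurable_xsection.
Qed.

Let Psi0T : Psi0 setT = 1%E.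
Proof.
rewrite /Psi0 preimage_setT PPE//.
rewrite (eq_integral (cst 1%E)); first by rewrite integral_cst//= mul1e probability_setT.
move=> w _; rewrite (_ : xsection _ _ = setT) ?prob_kernel//.
by apply/seteqP; split => // z _; rewrite /xsection /= inE.
Qed.

HB.instance Definition _ := Measure_isProbability.Build _ _ _ Psi0 Psi0T.

Definition PsiP : probability (CRd2 R d) R := Psi0.

Lemma p1G p : p1 (Gmap p) = p.1.
Proof.
case: p => -[f pf] z; rewrite /p1 /Gmap /=.
by congr exist; exact: Prop_irrelevance.
Qed.

Lemma PsiP_p1 (B : set (CRd R d)) : measurable B -> PsiP (@p1 R d @^-1` B) = eta B.
Proof.
move=> mB; rewrite /PsiP /= /Psi0.
have -> : Gmap @^-1` (@p1 R d @^-1` B) = B `*` setT.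
  apply/seteqP; split => -[w z] /=; rewrite /preimage /= p1G /=.
  by move=> ?; split.
  by case.
rewrite PPE; last exact: measurableX.
transitivity (\int[eta]_w (\1_B w)%:E)%E; last by rewrite integral_indic// setIT.
apply: eq_integral => w _; rewrite /indic.
have [wB|wB] := boolP (w \in B).
  by rewrite in_xsectionX// prob_kernel.
by rewrite notin_xsectionX// measure0.
Qed.


Lemma PsiP_ev0 (mu : probability Rd R)
  (eta0 : forall A : set Rd, measurable A -> eta (@ev R _ 0 @^-1` A) = mu A)
  (C : set (Rd * Rd)) : measurable C ->
  PsiP (@ev R _ 0 @^-1` C) = (\int[mu]_x psi x (xsection C x))%E.
Proof.
move=> mC; rewrite /PsiP /= /Psi0.
have h0 : (0:R) \in `[0, 1]%classic by rewrite inE /= in_itv /= lexx ler01.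
have mf : measurable_fun [set: CRd R d * Rd] (fun p => (ev 0 p.1, p.2)).
  apply/measurable_fun_pairP; split => //=.
  exact: (measurableT_comp (mev h0) measurable_fst).
  exact: measurable_snd.
have -> : Gmap @^-1` (ev 0 @^-1` C) = (fun p => (ev 0 p.1, p.2)) @^-1` C by [].
rewrite PPE; last by have := mf measurableT C mC; rewrite setTI.
pose f x := psi x (xsection C x).
have mfx : measurable_fun [set: Rd] f.
  by apply: measurable_fun_xsection_finite_kernel; rewrite inE.
transitivity (\int[eta]_(w in ev 0 @^-1` setT) (f \o ev 0) w)%E.
  apply: eq_integral => w _; rewrite /f /=.
  by rewrite !xsectionE.
rewrite -ge0_integral_pushforward//; last exact: mev.
apply: eq_measure_integral => [|? A mA _]; first exact: mev.
exact: (eta0 A mA).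
Qed.

End K.

Definition Sdiag (t : R) : set (CRd2 R d) :=
  [set w | (curve_fun w t).2 = (curve_fun w 0).2].

Lemma h01 : (0:R) \in `[0, 1]%classic.
Proof. by rewrite inE /= in_itv /= lexx ler01. Qed.

Lemma mSdiag t : t \in `[0, 1]%classic -> measurable (Sdiag t).
Proof.
move=> t01.
have -> : Sdiag t = \bigcap_j (match insub j with
    | Some i => [set w : CRd2 R d | (ev t w).2 ord0 i - (ev 0 w).2 ord0 i = 0]
    | None => setT end).
  apply/seteqP; split => w /=.
    by move=> e j _; case: insub => // i; rewrite /= /ev e subrr.
  move=> h; apply/rowP => i; have := h (val i) I; rewrite valK /=.
  by move/eqP; rewrite subr_eq0 => /eqP.
apply: bigcapT_measurable => j; case: insub => [i|//].
have mh : measurable_fun [set: CRd2 R d]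
    (fun w => (ev t w).2 ord0 i - (ev 0 w).2 ord0 i).
  apply: measurable_funB.
    exact: (measurableT_comp (mcoord i) (measurableT_comp measurable_snd (mev2 t01))).
  exact: (measurableT_comp (mcoord i) (measurableT_comp measurable_snd (mev2 h01))).
have := mh measurableT [set 0] (measurable_set1 0); rewrite setTI; exact.
Qed.

Definition Sset : set (CRd2 R d) :=
  [set w | forall t, `[0, 1]%classic t -> (curve_fun w t).2 = (curve_fun w 0).2].

Lemma clamp01_in (t : R) : @clamp01 R t \in `[0, 1]%classic.
Proof.
rewrite inE /= in_itv /= /clamp01 le_max lexx /= ge_max ler01 /=.
by rewrite ge_min lexx orbT.
Qed.

Lemma mS : measurable Sset.
Proof.
have -> : Sset = \bigcap_n \bigcap_k Sdiag (clamp01 (k%:R / n.+1%:R)).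
  apply/seteqP; split => w /=.
    move=> h n _ k _; apply: h; have := clamp01_in (k%:R / n.+1%:R).
    by rewrite inE.
  move=> h; apply: const01.
    case: w h => f [cf ef] /= h.
    move=> x; apply: continuous_comp; [exact: cf | exact: cvg_snd].
  by move=> n k; exact: h.
apply: bigcapT_measurable => n; apply: bigcapT_measurable => k.
exact: mSdiag (clamp01_in _).
Qed.

Lemma S_partial2 w : Sset w -> @partial2_zero R d w.
Proof.
move=> Sw t; rewrite inE => t01.
apply: cvg_near_cst.
suff : nbhs (0:R) (fun h => [set h | h != 0 /\ t + h \in `[0, 1]%classic] h ->
    h^-1 *: ((curve_fun w (t + h)).2 - (curve_fun w t).2) = 0) by [].
apply: filterE => h [_]; rewrite inE => th01.
by rewrite (Sw _ th01) (Sw _ t01) subrr scaler0.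
Qed.

Lemma S_C1y w : Sset w -> @C1y R d w.
Proof.
move=> Sw; exists (fun _ => 0); split; first exact: cst_continuous.
exact: S_partial2.
Qed.

Lemma GS p : Sset (Gmap p).
Proof. by []. Qed.

Lemma PsiP_nS psi eta : PsiP psi eta (~` Sset) = 0%E.
Proof.
rewrite /PsiP /= /Psi0 (_ : Gmap @^-1` _ = set0) ?measure0//.
by apply/seteqP; split => p //=; apply; exact: GS.
Qed.

End S.

Unset Implicit Arguments. Set Strict Implicit.

Theorem mainTheorem2 (R : realType) (d : nat)
  (mu : probability 'rV[R]_d R)
  (mu_P2 : (\int[mu]_x (sqnorm x)%:E < +oo)%E)
  (psi : R.-pker 'rV[R]_d ~> 'rV[R]_d)
  (psi_T : (\int[mu]_x \int[psi x]_z (sqnorm z)%:E < +oo)%E)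
  (eta : probability (CRd R d) R)
  (eta0 : forall A : set 'rV[R]_d, measurable A ->
     eta (@ev R _ 0 @^-1` A) = mu A) :
  exists Psi : probability (CRd2 R d) R,
    [/\ (forall B : set (CRd R d), measurable B ->
           Psi (@p1 R d @^-1` B) = eta B),
        {ae Psi, forall w, @C1y R d w},
        {ae Psi, forall w, @partial2_zero R d w} &
        (forall C : set ('rV[R]_d * 'rV[R]_d), measurable C ->
           Psi (@ev R _ 0 @^-1` C) = (\int[mu]_x psi x (xsection C x))%E)].
Proof.
exists (PsiP psi eta); split.
- by move=> B mB; exact: PsiP_p1.
- exists (~` @Sset R d); split; [exact: measurableC (@mS R d) | exact: PsiP_nS |].
  by move=> w /= nC Sw; apply: nC; exact: S_C1y.
- exists (~` @Sset R d); split; [exact: measurableC (@mS R d) | exact: PsiP_nS |].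
  by move=> w /= nC Sw; apply: nC; exact: S_partial2.
- by move=> C mC; exact: PsiP_ev0.
Qed.
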